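(* Let $p$ be a prime and let $f$ be one of the following automorphisms of $\mathbb{Z}_p^2$ (acting on column vectors): $D(b,c)=\begin{bmatrix} b&0\\0&c\end{bmatrix}$ with $1<b\le c<p$; $G(b)=\begin{bmatrix} b&1\\0&b\end{bmatrix}$ with $1<b<p$; $H(q)=\begin{bmatrix}0&1\\-b_0&-b_1\end{bmatrix}$ where $q=x^2+b_1x+b_0$ is irreducible over $\mathbb{Z}_p$. Then the (connected) quandle $\mathrm{Aff}(\mathbb{Z}_p^2,f)$ is simply connected if and only if $f$ is one of: (i) $D(b,c)$ with $bc\not\equiv 1\pmod p$; (ii) $G(b)$ with $b\not\equiv -1\pmod p$; (iii) $H(q)$ with $q=x^2+b_1x+b_0$ and $b_0\neq 1$.
   Context: A quandle is a set $Q$ with a binary operation $*$ such that every left translation $L_x:y\mapsto x*y$ is bijective, $x*(y*z)=(x*y)*(x*z)$ and $x*x=x$. For an abelian group $A$ and $f\in\mathrm{Aut}(A)$, the affine quandle $\mathrm{Aff}(A,f)$ is $A$ with $x*y=x+f(y-x)$. $Q$ is connected if $\langle L_x:x\in Q\rangle$ is transitive on $Q$. Every connected affine quandle over $\mathbb{Z}_p^2$ is isomorphic to $\mathrm{Aff}(\mathbb{Z}_p^2,f)$ for $f$ in the list above. For a set $S$, a quandle cocycle with values in $\mathrm{Sym}_S$ is $\theta:Q\times Q\to\mathrm{Sym}_S$ with $\theta_{x*y,x*z}\theta_{x,z}=\theta_{x,y*z}\theta_{y,z}$ and $\theta_{x,x}=1$; it is cohomologous to the trivial cocycle if there is $\gamma:Q\to\mathrm{Sym}_S$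 with $\theta_{x,y}=\gamma_{x*y}\gamma_y^{-1}$ for all $x,y$. $Q$ is simply connected if it is connected and, for every set $S$, every quandle cocycle with values in $\mathrm{Sym}_S$ is cohomologous to the trivial cocycle. *)

(* Defs.v *)
From HB Require Import structures.
From mathcomp Require Import all_boot all_order all_algebra.
Set Implicit Arguments. Unset Strict Implicit. Unset Printing Implicit Defensive.
Import GRing.Theory.
Local Open Scope ring_scope.

Section Quandle.
Variables (Q : Type) (op : Q -> Q -> Q).

Definition is_quandle : Prop :=
  [/\ forall x, bijective (op x),
      forall x y z, op x (op y z) = op (op x y) (op x z)
    & forall x, op x x = x].

(* orbit of x under the group generated by the left translations L_z
   (closed under each L_z and each L_z^{-1}) *)
Inductive lorbit (x : Q) : Q -> Prop :=
  | lorbit_refl : lorbit x x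
  | lorbit_L z y : lorbit x y -> lorbit x (op z y)
  | lorbit_Linv z y : lorbit x (op z y) -> lorbit x y.

Definition quandle_connected : Prop := forall x y, lorbit x y.
End Quandle.

Record Sym (S : Type) := MkSym {
  sym_fun : S -> S;
  sym_inv : S -> S;
  sym_funK : cancel sym_fun sym_inv;
  sym_invK : cancel sym_inv sym_fun }.

Section Cocycle.
Variables (Q : Type) (op : Q -> Q -> Q) (S : Type).

Definition is_quandle_cocycle (theta : Q -> Q -> Sym S) : Prop :=
  (forall x y z (s : S),
     sym_fun (theta (op x y) (op x z)) (sym_fun (theta x z) s)
     = sym_fun (theta x (op y z)) (sym_fun (theta y z) s))
  /\ (forall x (s : S), sym_fun (theta x x) s = s).

Definition cohomologous_to_trivial (theta : Q -> Q -> Sym S) : Prop :=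
  exists gamma : Q -> Sym S, forall x y (s : S),
    sym_fun (theta x y) s = sym_fun (gamma (op x y)) (sym_inv (gamma y) s).
End Cocycle.

Definition simply_connected (Q : Type) (op : Q -> Q -> Q) : Prop :=
  is_quandle op /\ quandle_connected op /\
  forall (S : Type) (theta : Q -> Q -> Sym S),
    is_quandle_cocycle op theta -> cohomologous_to_trivial op theta.

Definition aff_op (p : nat) (f : 'M['F_p]_2) (x y : 'cV['F_p]_2) : 'cV['F_p]_2 :=
  x + f *m (y - x).

Definition matD (p b c : nat) : 'M['F_p]_2 :=
  \matrix_(i < 2, j < 2)
    (if (i == 0) && (j == 0) then b%:R
     else if (i == 1) && (j == 1) then c%:R else 0).

Definition matG (p b : nat) : 'M['F_p]_2 :=
  \matrix_(i < 2, j < 2)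
    (if i == j then b%:R else if (i == 0) && (j == 1) then 1 else 0).

(* companion matrix [[0,1],[-b0,-b1]] of q = x^2 + b1 x + b0 *)
Definition matH (p : nat) (b0 b1 : 'F_p) : 'M['F_p]_2 :=
  \matrix_(i < 2, j < 2)
    (if i == 0 then (if j == 0 then 0 else 1)
     else (if j == 0 then - b0 else - b1)).

Definition polyq (p : nat) (b0 b1 : 'F_p) : {poly 'F_p} :=
  'X^2 + b1 *: 'X + b0%:P.

(* Main.v *)
From HB Require Import structures.
From mathcomp Require Import all_boot all_order all_algebra.
From mathcomp Require Import boolp.
From mathcomp Require Import ring.
Require Import Defs.
Set Warnings "-notation-overridden -ambiguous-paths".
Open Scope ring_scope.
Import GRing.Theory.


Lemma det2E (R : comPzRingType) (A : 'M[R]_2) :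
  \det A = A 0 0 * A 1 1 - A 0 1 * A 1 0.
Proof.
rewrite (expand_det_row _ 0) !big_ord_recl big_ord0 addr0 /cofactor !det_mx11.
rewrite /row' /col' !mxE /= expr0 mul1r expr1 mulN1r mulrN.
congr (_ + _); [congr (_ * _) | congr (- (_ * _))]; congr (A _ _); exact: val_inj.
Qed.

Lemma mulmx2E (R : comPzRingType) (A : 'M[R]_2) (x : 'cV[R]_2) i :
  (A *m x) i 0 = A i 0 * x 0 0 + A i 1 * x 1 0.
Proof. rewrite !mxE !big_ord_recl big_ord0 addr0.
congr (_ + _); congr (_ * _); congr (fun_of_matrix _ _ _); exact: val_inj.
Qed.
Lemma n01 : (0 == 1 :> 'I_2) = false. Proof. by []. Qed.
Lemma n10 : (1 == 0 :> 'I_2) = false. Proof. by []. Qed.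

Section GW.
Variable G : groupType.
Local Open Scope group_scope.
Implicit Types x y z w : G.

Lemma commute_symV {x y} : commute x y -> commute x^-1 y.
Proof. by move/commute_sym/commuteV/commute_sym. Qed.

Lemma commute_conj {z w} : commute z w -> z^-1 * w * z = w.
Proof. by move=> H; rewrite -mulgA -H mulKg. Qed.

Lemma conj_cancel z x y : commute z x -> commute z y ->
  x * (z^-1 * y) * x^-1 * (z^-1 * y)^-1 = x * y * x^-1 * y^-1.
Proof.
move=> hx hy.
have hxi := commuteV hx; have hyi := commuteV hy.
have hW : commute z (x * y * x^-1 * y^-1) by do 3 apply: commuteM => //.
rewrite invgM invgK.
have -> : x * (z^-1 * y) = z^-1 * (x * y).
  by rewrite mulgA -(commute_symV hx) -mulgA.
rewrite !mulgA.
by rewrite -[RHS](commute_conj hW) !mulgA.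
Qed.

Lemma comm_mul x y w : commute (x * w * x^-1 * w^-1) y ->
  x * (y * w) * x^-1 * (y * w)^-1 = (x * y * x^-1 * y^-1) * (x * w * x^-1 * w^-1).
Proof.
move=> h.
have hi := commuteV h.
by rewrite -[in RHS]mulgA -hi invgM !mulgA mulgVK.
Qed.

Lemma comm_inv x y : (x * y * x^-1 * y^-1)^-1 = y * x * y^-1 * x^-1.
Proof. by rewrite !invgM !invgK !mulgA. Qed.

Lemma comm1_commute x y : x * y * x^-1 * y^-1 = 1 -> commute x y.
Proof.
move/divg1_eq => h; rewrite /commute -[in RHS]h.
by rewrite mulgVK.
Qed.
Lemma HR_helper {a b c d e l : G} : l * b = d * l -> l * a = e * l ->
  a * l * (b * l) = c * l * (a * l) -> a * d = c * e.
Proof.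
move=> hb ha h.
rewrite mulgA -(mulgA a) hb mulgA in h.
rewrite mulgA -(mulgA c) ha mulgA in h.
by apply: (mulIg l); apply: (mulIg l).
Qed.
Lemma G1_helper {a b c l t : G} : l * b = c * l -> a * c = t -> a * l * b = t * l.
Proof. by move=> hb ha; rewrite -mulgA hb mulgA ha. Qed.
End GW.


Definition e1 {p} : 'cV['F_p]_2 := delta_mx 0 0.
Definition e2 {p} : 'cV['F_p]_2 := delta_mx 1 0.

Lemma decomp p (a : 'cV['F_p]_2) :
  a = (e1 *+ nat_of_ord (a 0 0) + e2 *+ nat_of_ord (a 1 0))%R.
Proof.
rewrite -!scaler_nat !natr_Zp; apply/matrixP => i j.
rewrite (ord1 j); case: i => [[|[|i]] Hi] //.
- have -> : Ordinal Hi = 0 by exact: val_inj.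
  by rewrite !mxE !eqxx n01 /= mulr1 mulr0 addr0.
- have -> : Ordinal Hi = 1 by exact: val_inj.
  by rewrite !mxE !eqxx n10 /= mulr1 mulr0 add0r.
Qed.

Lemma fe p (f : 'M['F_p]_2) (i j : 'I_2) : (f *m (delta_mx j 0 : 'cV['F_p]_2)) i 0 = f i j.
Proof.
rewrite mulmx2E.
case: j => [[|[|j]] Hj] //.
- have -> : Ordinal Hj = 0 by exact: val_inj.
  by rewrite !mxE !eqxx n10 /= mulr1 mulr0 addr0.
- have -> : Ordinal Hj = 1 by exact: val_inj.
  by rewrite !mxE !eqxx n01 /= mulr1 mulr0 add0r.
Qed.

Definition v0 {p} (a : 'cV['F_p]_2) : nat := nat_of_ord (a 0 0).
Definition v1 {p} (a : 'cV['F_p]_2) : nat := nat_of_ord (a 1 0).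
Definition m_ {p} (f : 'M['F_p]_2) (i j : 'I_2) : nat := nat_of_ord (f i j).

Section Abstract.
Variables (G : groupType) (p : nat) (f : 'M['F_p]_2) (T : 'cV['F_p]_2 -> G) (l : G).

Definition qcentral (z : G) := (forall c, commute z (T c)) /\ commute z l.
Definition kap a b : G := (T a * T b * (T (a + b))^-1)%g.
Definition Cm a b : G := (T a * T b * (T a)^-1 * (T b)^-1)%g.

Hypothesis hp : prime p.
Hypothesis T0 : T 0 = 1%g.
Hypothesis Hl : forall a, (l * T a = T (f *m a) * l)%g.
Hypothesis HR : forall u v,
  (T u * T (f *m v) = T ((1 - f) *m u + f *m v) * T (f *m u))%g.
Hypothesis Hk : forall a b, qcentral (kap a b).
Hypothesis Hf : f \in unitmx.
Hypothesis Hg : (1 - f) \in unitmx.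
Hypothesis Hdet : f 0 0 * f 1 1 - f 0 1 * f 1 0 != 1.

Local Open Scope group_scope.

Lemma qcentral1 : qcentral 1.
Proof. by split => [c|]; apply: commute_sym; apply: commute1. Qed.

Lemma centralM z w : qcentral z -> qcentral w -> qcentral (z * w).
Proof.
move=> [hz1 hz2] [hw1 hw2]; split => [c|].
  by apply: commute_sym; apply: commuteM; apply: commute_sym.
by apply: commute_sym; apply: commuteM; apply: commute_sym.
Qed.

Lemma centralV z : qcentral z -> qcentral z^-1.
Proof. by move=> [h1 h2]; split => [c|]; apply: commute_symV. Qed.

Lemma central_Cm z a b : qcentral z -> commute z (Cm a b).
Proof.
move=> [h1 _]; rewrite /Cm.
have hV c := commuteV (h1 c).
by apply: commuteM; [apply: commuteM; [apply: commuteM|]|].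
Qed.

Lemma Cm_kap a b : Cm a b = kap a b * (kap b a)^-1.
Proof. by rewrite /Cm /kap !invgM !invgK (addrC b a) !mulgA mulgVK. Qed.

Lemma central_C a b : qcentral (Cm a b).
Proof. by rewrite Cm_kap; apply: centralM; [|apply: centralV]; apply: Hk. Qed.

Lemma Tadd b c : T (b + c) = (kap b c)^-1 * (T b * T c).
Proof. by rewrite /kap invgM invgK mulgVK. Qed.

Lemma Cm_addr a b c : Cm a (b + c) = Cm a b * Cm a c.
Proof.
have [h1 h2] := Hk b c.
rewrite [Cm a (b + c)]/Cm Tadd conj_cancel; last 2 first.
- exact: h1.
- by apply: commuteM.
rewrite comm_mul //.
exact: (central_C a c).1 b.
Qed.

Lemma Cm_inv a b : (Cm a b)^-1 = Cm b a.
Proof. by rewrite /Cm comm_inv. Qed.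

Lemma Cm_addl a b c : Cm (a + b) c = Cm a c * Cm b c.
Proof.
rewrite -Cm_inv Cm_addr invgM !Cm_inv.
by apply: commute_sym; apply: central_Cm; apply: central_C.
Qed.

Lemma Cm0l b : Cm 0 b = 1.
Proof. by rewrite /Cm T0 mul1g invg1 mulg1 mulgV. Qed.

Lemma Cmaa a : Cm a a = 1.
Proof. by rewrite /Cm mulgK mulgV. Qed.

Lemma Cm_mulnl a b n : Cm (a *+ n) b = Cm a b ^+ n.
Proof.
elim: n => [|n IH]; first by rewrite mulr0n Cm0l.
by rewrite mulrS Cm_addl IH expgS.
Qed.

Lemma Cm0r b : Cm b 0 = 1.
Proof. by rewrite -Cm_inv Cm0l invg1. Qed.

Lemma Cm_mulnr a b n : Cm a (b *+ n) = Cm a b ^+ n.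
Proof.
elim: n => [|n IH]; first by rewrite mulr0n Cm0r.
by rewrite mulrS Cm_addr IH expgS.
Qed.


Definition ce := Cm (@e1 p) (@e2 p).

Lemma Cm_decomp a b : Cm a b =
  ce ^+ (v1 b * v0 a)%N * (ce^-1) ^+ (v0 b * v1 a)%N.
Proof.
rewrite {1}(decomp _ a) {1}(decomp _ b).
rewrite Cm_addl !Cm_mulnl !Cm_addr !Cm_mulnr !Cmaa !expg1n mul1g mulg1.
by rewrite /ce -[Cm e2 e1]Cm_inv !expgnA.
Qed.

Lemma ce_p : ce ^+ p = 1.
Proof.
rewrite /ce -Cm_mulnl -scaler_nat.
by rewrite (pchar_Fp_0 hp) scale0r Cm0l.
Qed.

Lemma expmod (x : G) n : x ^+ p = 1 -> x ^+ n = x ^+ (n %% p).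
Proof.
by move=> hx; rewrite {1}(divn_eq n p) expgnDr mulnC expgnA hx expg1n mul1g.
Qed.

Lemma exp_cancel (x : G) N M : x ^+ p = 1 -> (N%:R : 'F_p) != M%:R ->
  x ^+ N = x ^+ M -> x = 1.
Proof.
move=> hx hNM hxNM.
set d : 'F_p := (N%:R - M%:R)%R.
have dne0 : d != 0%R by rewrite /d subr_eq0.
set u := nat_of_ord (d^-1)%R.
have E : ((N * u)%:R : 'F_p) = (M * u + 1)%:R.
  rewrite natrD !natrM /u natr_Zp.
  have := mulfV dne0; rewrite /d mulrBl => /eqP; rewrite subr_eq => /eqP ->.
  by rewrite addrC.
have Em : ((N * u) %% p = (M * u + 1) %% p)%N.
  by rewrite -!(val_Fp_nat hp) E.
have : x ^+ (M * u) * 1 = x ^+ (M * u) * x.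
  rewrite mulg1 -expgSr -addn1 (@expmod x (M * u + 1) hx) -Em -(@expmod x (N * u) hx).
  by rewrite !expgnA hxNM.
by move/mulgI.
Qed.

Lemma Tf a : T (f *m a) = l * T a * l^-1.
Proof. by rewrite Hl mulgK. Qed.

Lemma Cm_f a b : Cm (f *m a) (f *m b) = Cm a b.
Proof.
rewrite /Cm !Tf !invgM !invgK !mulgA !mulgVK.
have h := (central_C a b).2.
have E : l * T a * T b * (T a)^-1 * (T b)^-1 = l * Cm a b by rewrite /Cm !mulgA.
by rewrite E -h mulgK.
Qed.

Lemma ce1 : ce = 1.
Proof.
have := Cm_f (@e1 p) (@e2 p); rewrite Cm_decomp /v0 /v1 /e1 /e2 !fe -/e1 -/e2 -/ce.
move=> h.
apply: (exp_cancel ce (m_ f 1%R 1%R * m_ f 0%R 0%R)%N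
                    (m_ f 0%R 1%R * m_ f 1%R 0%R).+1 ce_p).
  rewrite -(addn1 (m_ f 0%R 1%R * m_ f 1%R 0%R)) natrD !natrM /m_.
  rewrite (natr_Zp (f 1%R 1%R)) (natr_Zp (f 0%R 0%R)) (natr_Zp (f 0%R 1%R)) (natr_Zp (f 1%R 0%R)).
  apply: contra Hdet => /eqP E.
  by rewrite [X in (X - _)%R]mulrC E addrC addKr.
by rewrite expgS -[X in _ = X * _]h -mulgA expVgn mulVg mulg1.
Qed.

Lemma Cm1 a b : Cm a b = 1.
Proof. by rewrite Cm_decomp ce1 invg1 !expg1n mulg1. Qed.

Lemma Tcomm a b : commute (T a) (T b).
Proof. exact: comm1_commute (Cm1 a b). Qed.

Lemma Thom a b : T a * T b = T (a + b)%R.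
Proof.
set u := (invmx (1 - f) *m a)%R; set v := (invmx f *m b)%R.
have hu : ((1 - f) *m u)%R = a by rewrite /u mulmxA mulmxV // mul1mx.
have hv : (f *m v)%R = b by rewrite /v mulmxA mulmxV // mul1mx.
have h1 := HR u v; rewrite hu hv in h1.
have h0 := HR u 0; rewrite mulmx0 addr0 T0 mulg1 hu in h0.
rewrite h0 -mulgA (Tcomm _ b) mulgA in h1.
exact: mulIg h1.
Qed.

End Abstract.


Lemma sym_eq (S : Type) (v w : Sym S) : sym_fun v =1 sym_fun w -> v = w.
Proof.
case: v => fv iv fvK ivK; case: w => fw iw fwK iwK /= H.
have Ef : fv = fw := funext H.
subst fw.
have Ei : iv = iw.
  apply: funext => x; apply: (can_inj fvK); by rewrite ivK iwK.
subst iw.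
by rewrite (Prop_irrelevance fvK fwK) (Prop_irrelevance ivK iwK).
Qed.

Definition symg (S : Type) := Sym S.

Section SymGroup.
Variable S : Type.
Definition smul (v w : symg S) : symg S :=
  @MkSym S (sym_fun v \o sym_fun w) (sym_inv w \o sym_inv v)
    (fun x => etrans (f_equal (sym_inv w) (sym_funK v (sym_fun w x))) (sym_funK w x))
    (fun x => etrans (f_equal (sym_fun v) (sym_invK w (sym_inv v x))) (sym_invK v x)).
Definition sone : symg S := @MkSym S id id (fun x => erefl) (fun x => erefl).
Definition sinv (v : symg S) : symg S :=
  @MkSym S (sym_inv v) (sym_fun v) (sym_invK v) (sym_funK v).
Lemma smulA : associative smul. Proof. by move=> x y z; apply: sym_eq. Qed.
Lemma smul1 : left_id sone smul. Proof. by move=> x; apply: sym_eq. Qed.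
Lemma smulr1 : right_id sone smul. Proof. by move=> x; apply: sym_eq. Qed.
Lemma smulV : left_inverse sone sinv smul.
Proof. by move=> x; apply: sym_eq => e /=; rewrite sym_funK. Qed.
Lemma smulVr : right_inverse sone sinv smul.
Proof. by move=> x; apply: sym_eq => e /=; rewrite sym_invK. Qed.
End SymGroup.

HB.instance Definition _ (S : Type) := gen_eqMixin (symg S).
HB.instance Definition _ (S : Type) := gen_choiceMixin (symg S).
HB.instance Definition _ (S : Type) :=
  isGroup.Build (symg S) (@smulA S) (@smul1 S) (@smulr1 S) (@smulV S) (@smulVr S).

Lemma symg_mulE (S : Type) (v w : symg S) x : sym_fun (v * w)%g x = sym_fun v (sym_fun w x).
Proof. by []. Qed.
Lemma symg_invE (S : Type) (v : symg S) x : sym_fun (v^-1)%g x = sym_inv v x.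
Proof. by []. Qed.


Section Affine.
Variables (p : nat) (f : 'M['F_p]_2).
Hypothesis Hf : f \in unitmx.
Hypothesis Hg : (1 - f) \in unitmx.

Local Notation Q := 'cV['F_p]_2.
Local Notation op := (aff_op f).
Definition fi := invmx f.
Definition hh := invmx (1 - f).
Definition opi (x y : Q) : Q := x + fi *m (y - x).

Lemma ffi : f *m fi = 1%:M. Proof. exact: mulmxV. Qed.
Lemma fif : fi *m f = 1%:M. Proof. exact: mulVmx. Qed.
Lemma ghh : (1 - f) *m hh = 1%:M. Proof. exact: mulmxV. Qed.
Lemma hhg : hh *m (1 - f) = 1%:M. Proof. exact: mulVmx. Qed.
Lemma fg_comm : f *m (1 - f) = (1 - f) *m f.
Proof. by rewrite mulmxBr mulmxBl mulmx1 mul1mx. Qed.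
Lemma fhh_comm : f *m hh = hh *m f.
Proof.
rewrite -[f *m hh]mul1mx -hhg -!mulmxA; congr (_ *m _).
by rewrite !mulmxA -fg_comm -mulmxA ghh mulmx1.
Qed.

Lemma opE x y : op x y = (1 - f) *m x + f *m y.
Proof.
rewrite /aff_op mulmxBr mulmxBl mul1mx.
by rewrite addrA addrAC.
Qed.

Lemma op_dist x y z : op x (op y z) = op (op x y) (op x z).
Proof.
rewrite !opE !mulmxDr !mulmxA -fg_comm.
have E : (1 - f) *m x = (1 - f) *m (1 - f) *m x + f *m (1 - f) *m x.
  by rewrite -mulmxDl -mulmxDl subrK mul1mx.
by rewrite {1}E addrACA.
Qed.

Lemma op_idem x : op x x = x.
Proof. by rewrite /aff_op subrr mulmx0 addr0. Qed.

Lemma opK x : cancel (op x) (opi x).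
Proof.
move=> y; rewrite /opi /aff_op (addrC x (f *m (y - x))) addrK mulmxA fif mul1mx.
by rewrite addrC subrK.
Qed.

Lemma opiK x : cancel (opi x) (op x).
Proof.
move=> y; rewrite /opi /aff_op (addrC x (fi *m (y - x))) addrK mulmxA ffi mul1mx.
by rewrite addrC subrK.
Qed.

Lemma op_quandle : is_quandle op.
Proof.
split.
- by move=> x; exists (opi x); [apply: opK | apply: opiK].
- exact: op_dist.
- exact: op_idem.
Qed.

Lemma op_connected : quandle_connected op.
Proof.
move=> x y.
have -> : y = op (hh *m (y - f *m x)) x.
  by rewrite opE mulmxA ghh mul1mx subrK.
by apply: lorbit_L; apply: lorbit_refl.
Qed.

Lemma op0 y : op 0 y = f *m y.
Proof. by rewrite opE mulmx0 add0r. Qed.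
Lemma opi0 y : opi 0 y = fi *m y.
Proof. by rewrite /opi add0r subr0. Qed.

Lemma Ta_q a y : op (hh *m a) (opi 0 y) = a + y.
Proof. by rewrite opE opi0 !mulmxA ghh /fi mulmxV // !mul1mx. Qed.

Lemma Ta_qi a y : op 0 (opi (hh *m a) y) = y - a.
Proof.
rewrite op0 /opi mulmxDr !mulmxA ffi mul1mx.
have Ea : a = hh *m a - f *m hh *m a.
  by rewrite -{1}[a]mul1mx -ghh !mulmxBl !mul1mx.
rewrite [in RHS]Ea opprB addrC -!addrA; congr (_ + _).
by rewrite addrC.
Qed.

Section Cocycle.
Variables (S : Type) (th : Q -> Q -> Sym S).
Hypothesis Hth : is_quandle_cocycle op th.

Local Notation E := (Q * S)%type.
Definition Lf x (e : E) : E := (op x e.1, sym_fun (th x e.1) e.2).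
Definition Li x (e : E) : E := (opi x e.1, sym_inv (th x (opi x e.1)) e.2).
Lemma LfK x : cancel (Lf x) (Li x).
Proof. by case=> y s; rewrite /Lf /Li /= opK sym_funK. Qed.
Lemma LiK x : cancel (Li x) (Lf x).
Proof. by case=> y s; rewrite /Lf /Li /= opiK sym_invK. Qed.
Definition LS x : symg E := @MkSym E (Lf x) (Li x) (LfK x) (LiK x).

Lemma LfM x y e : Lf x (Lf y e) = Lf (op x y) (Lf x e).
Proof. by case: e => z s; rewrite /Lf /= op_dist (proj1 Hth). Qed.

Lemma LSM x y : (LS x * LS y = LS (op x y) * LS x)%g.
Proof. by apply: sym_eq => e; rewrite !symg_mulE /= LfM. Qed.

Definition good (w : symg E) (wq wqi : Q -> Q) :=
  [/\ cancel wq wqi, cancel wqi wq, forall e, (sym_fun w e).1 = wq e.1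
    & forall x e, sym_fun w (Lf x e) = Lf (wq x) (sym_fun w e)].

Lemma good_LS x : good (LS x) (op x) (opi x).
Proof. by split => [||e|y e]; [apply: opK|apply: opiK| |rewrite /= LfM]. Qed.

Lemma good_mul v vq vqi w wq wqi : good v vq vqi -> good w wq wqi ->
  good (v * w)%g (vq \o wq) (wqi \o vqi).
Proof.
case=> [v1 v2 v3 v4] [w1 w2 w3 w4]; split.
- by move=> y /=; rewrite v1 w1.
- by move=> y /=; rewrite w2 v2.
- by move=> e; rewrite symg_mulE v3 w3.
- by move=> x e; rewrite !symg_mulE w4 v4.
Qed.

Lemma good_inv w wq wqi : good w wq wqi -> good (w^-1)%g wqi wq.
Proof.
case=> [w1 w2 w3 w4]; split => //.
- move=> e; rewrite symg_invE.
  by rewrite -{2}(sym_invK w e) w3 w1.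
- move=> x e; rewrite !symg_invE.
  apply: (can_inj (sym_funK w)).
  by rewrite w4 !sym_invK w2.
Qed.

Lemma good_ext w wq wqi wq' wqi' : good w wq wqi -> wq =1 wq' -> wqi =1 wqi' ->
  good w wq' wqi'.
Proof.
case=> [w1 w2 w3 w4] E1 E2; split.
- by move=> y; rewrite -E1 -E2 w1.
- by move=> y; rewrite -E1 -E2 w2.
- by move=> e; rewrite -E1 w3.
- by move=> x e; rewrite -E1 w4.
Qed.

Arguments good_mul {v vq vqi w wq wqi}.
Arguments good_inv {w wq wqi}.
Arguments good_ext {w wq wqi wq' wqi'}.

Lemma good_commute w wq wqi : good w wq wqi -> (forall y, wq y = y) ->
  forall x, commute w (LS x).
Proof.
case=> [w1 w2 w3 w4] Hid x; apply: sym_eq => e.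
by rewrite !symg_mulE /= w4 Hid.
Qed.

Arguments good_commute {w wq wqi}.

Definition l0 := LS 0.
Definition Tt (a : Q) : symg E := (LS (hh *m a) * l0^-1)%g.

Lemma good_T a : good (Tt a) (fun y => a + y) (fun y => y - a).
Proof.
apply: good_ext (good_mul (good_LS _) (good_inv (good_LS 0))) _ _.
- by move=> y /=; rewrite Ta_q.
- by move=> y /=; rewrite Ta_qi.
Qed.

Lemma T0 : Tt 0 = 1%g.
Proof. by rewrite /Tt mulmx0 mulgV. Qed.

Lemma LS_T z : LS z = (Tt ((1 - f) *m z) * l0)%g.
Proof. by rewrite /Tt mulgVK mulmxA hhg mul1mx. Qed.

Lemma Hl a : (l0 * Tt a = Tt (f *m a) * l0)%g.
Proof.
rewrite /Tt /l0 mulgVK mulgA LSM mulgK op0.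
by rewrite !mulmxA fhh_comm.
Qed.

Lemma HR u v : (Tt u * Tt (f *m v) = Tt ((1 - f) *m u + f *m v) * Tt (f *m u))%g.
Proof.
have h := LSM (hh *m u) (hh *m v).
have E1 : (1 - f) *m (hh *m u) = u by rewrite mulmxA ghh mul1mx.
have E2 : (1 - f) *m (hh *m v) = v by rewrite mulmxA ghh mul1mx.
have E3 : (1 - f) *m op (hh *m u) (hh *m v) = (1 - f) *m u + f *m v.
  by rewrite opE mulmxDr E1 !mulmxA -fg_comm -(mulmxA f) ghh mulmx1.
rewrite !LS_T E1 E2 E3 in h.
exact: (@HR_helper _ _ _ _ _ _ _ (Hl v) (Hl u) h).
Qed.

Lemma Hk a b : qcentral (symg E) p Tt l0 (kap (symg E) p Tt a b).
Proof.
have g := good_mul (good_mul (good_T a) (good_T b)) (good_inv (good_T (a + b))).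
have hc := good_commute g.
have hid : forall y, ((fun y => a + y) \o (fun y => b + y) \o (fun y => y - (a + b))) y = y.
  by move=> y /=; rewrite addrA (addrC (a + b)) subrK.
have hc' := hc hid.
rewrite /qcentral /kap; split; last exact: hc' 0.
move=> c; have -> : Tt c = (LS (hh *m c) * l0^-1)%g by [].
apply: commuteM; first exact: hc'.
by apply: commuteV; exact: hc'.
Qed.

Lemma Tt_fst y e : (sym_fun (Tt y) e).1 = y + e.1.
Proof. by case: (good_T y) => _ _ h _; rewrite h. Qed.

Lemma Tt_inv_fst y e : (sym_inv (Tt y) e).1 = e.1 - y.
Proof. by case: (good_inv (good_T y)) => _ _ h _; rewrite -symg_invE h. Qed.

Definition gf y s := (sym_fun (Tt y) (0, s)).2.
Definition gi y s := (sym_inv (Tt y) (y, s)).2.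

Lemma gfK y : cancel (gf y) (gi y).
Proof.
move=> s; rewrite /gf /gi.
have E : (y, (sym_fun (Tt y) (0, s)).2) = sym_fun (Tt y) (0, s).
  by rewrite [RHS]surjective_pairing Tt_fst /= addr0.
by rewrite E sym_funK.
Qed.

Lemma giK y : cancel (gi y) (gf y).
Proof.
move=> s; rewrite /gf /gi.
have E : (0, (sym_inv (Tt y) (y, s)).2) = sym_inv (Tt y) (y, s).
  by rewrite [RHS]surjective_pairing Tt_inv_fst /= subrr.
by rewrite E sym_invK.
Qed.

Definition gam y : Sym S := @MkSym S (gf y) (gi y) (gfK y) (giK y).

Lemma coboundary (hp : prime p) (Hdet : f 0 0 * f 1 1 - f 0 1 * f 1 0 != 1) :
  cohomologous_to_trivial op th.
Proof.
have Th := @Thom (symg E) p f Tt l0 hp T0 Hl HR Hk Hf Hg Hdet.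
exists gam => x y s /=.
rewrite /gf.
set s' := gi y s.
have Hy : sym_fun (Tt y) (0, s') = (y, s).
  have E : (0, s') = sym_inv (Tt y) (y, s).
    by rewrite [RHS]surjective_pairing Tt_inv_fst /= subrr.
  by rewrite E sym_invK.
have G1 : (LS x * Tt y = Tt (op x y) * l0)%g.
  rewrite (LS_T x) opE.
  exact: (@G1_helper _ _ _ _ _ _ (Hl y) (Th _ _)).
have L0e : sym_fun l0 (0, s') = (0, s').
  by apply: injective_projections => /=; [exact: op_idem | exact: (proj2 Hth)].
have := f_equal (fun w : symg E => (sym_fun w (0, s')).2) G1.
rewrite (@symg_mulE _ (LS x) (Tt y) (0, s')) (@symg_mulE _ (Tt (op x y)) l0 (0, s')) L0e Hy => h.
exact: h.
Qed.

End Cocycle.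

Definition det2 (x y : Q) : 'F_p := x 0 0 * y 1 0 - x 1 0 * y 0 0.
Arguments det2 : simpl never.

Lemma opEnt x y i : op x y i 0 = x i 0 + (f i 0 * (y 0 0 - x 0 0) + f i 1 * (y 1 0 - x 1 0)).
Proof. by rewrite /aff_op mxE mulmx2E !mxE. Qed.

Lemma det2_cocycle (Hd : f 0 0 * f 1 1 - f 0 1 * f 1 0 = 1) x y z :
  det2 x z + det2 (op x y) (op x z) = det2 y z + det2 x (op y z).
Proof.
have key : det2 x z + det2 (op x y) (op x z) =
  det2 y z + det2 x (op y z) +
  (f 0 0 * f 1 1 - f 0 1 * f 1 0 - 1) * (det2 x y + det2 y z - det2 x z).
  rewrite /det2 !opEnt; ring.
by rewrite key Hd subrr mul0r addr0.
Qed.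

Definition trans (c : 'F_p) : Sym 'F_p :=
  @MkSym 'F_p (fun s => s + c) (fun s => s - c) (fun s => addrK c s) (fun s => subrK c s).

Lemma not_sc (Hd : f 0 0 * f 1 1 - f 0 1 * f 1 0 = 1) : ~ simply_connected op.
Proof.
move=> [_ [_ H]].
have coc : is_quandle_cocycle op (fun x y => trans (det2 x y)).
  split.
  - move=> x y z s /=.
    by rewrite -[LHS]addrA -[RHS]addrA (det2_cocycle Hd).
  - by move=> x s /=; rewrite /det2 mulrC subrr addr0.
have [gam' Hgam] := H _ _ coc.
pose c y := sym_fun (gam' y) 0.
have Hc : forall x y, c (op x y) = c y + det2 x y.
  move=> x y; rewrite /c; have := Hgam x y (sym_fun (gam' y) 0).
  by rewrite sym_funK => <-.
have Hc0 : forall e, c e = c 0.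
  move=> e.
  have -> : e = op (hh *m e) 0 by rewrite opE mulmx0 addr0 mulmxA ghh mul1mx.
  by rewrite Hc /det2 !mxE !mulr0 subrr addr0.
have h := Hc e1 e2; rewrite !Hc0 in h.
have h0 : det2 e1 e2 = 0.
  by apply: (@addrI _ (c 0)); rewrite addr0 -h.
have D : det2 e1 e2 = 1.
  rewrite /det2 /e1 /e2 !mxE !eqxx n01 n10 /=.
  by rewrite mulr1 mulr0 subr0.
by have := @oner_neq0 ('F_p); rewrite -D h0 eqxx.
Qed.

Theorem sc_iff (hp : prime p) :
  simply_connected op <-> (f 0 0 * f 1 1 - f 0 1 * f 1 0 != 1).
Proof.
split.
- move=> H; apply/negP => /eqP Hd; exact: not_sc Hd H.
- move=> Hd; split; first exact: op_quandle.
  split; first exact: op_connected.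
  by move=> S th Hth; apply: coboundary.
Qed.

End Affine.


Lemma unit2 (F : fieldType) (A : 'M[F]_2) :
  A 0 0 * A 1 1 - A 0 1 * A 1 0 != 0 -> A \in unitmx.
Proof. by rewrite unitmxE det2E unitfE. Qed.

Lemma oneB_ent (F : fieldType) (A : 'M[F]_2) :
  [/\ (1 - A) 0 0 = 1 - A 0 0, (1 - A) 0 1 = - A 0 1,
      (1 - A) 1 0 = - A 1 0 & (1 - A) 1 1 = 1 - A 1 1].
Proof. by rewrite !mxE !eqxx n01 n10 /= !sub0r. Qed.

Section Fp.
Variables (p : nat) (hp : prime p).

Lemma FpE n m : ((n%:R : 'F_p) == m%:R) = (n == m %[mod p])%N.
Proof.
apply/eqP/eqP => H.
- by have := congr1 val H; rewrite /= !(val_Fp_nat hp).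
- by apply: val_inj; rewrite /= !(val_Fp_nat hp) H.
Qed.

Lemma Fp_small_neq n m : (n < p)%N -> (m < p)%N -> n != m -> (n%:R : 'F_p) != m%:R.
Proof. by move=> hn hm; rewrite FpE !modn_small. Qed.

Lemma irr_noroot (q : {poly 'F_p}) x : irreducible_poly q -> size q = 3%N -> ~~ root q x.
Proof.
move=> irr sz; apply/negP => rt.
have dv : ('X - x%:P) %| q by rewrite dvdp_XsubCl.
have := apply_irredp irr _ dv; rewrite size_XsubC => /(_ isT) /eqp_size.
by rewrite size_XsubC sz.
Qed.

Lemma size_polyq (b0 b1 : 'F_p) : size (polyq b0 b1) = 3%N.
Proof.
rewrite /polyq -addrA size_polyDl size_polyXn //.
apply: (leq_ltn_trans (size_polyD _ _)); rewrite gtn_max.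
by rewrite (leq_ltn_trans (size_scale_leq _ _)) ?size_polyX // (leq_ltn_trans (size_polyC_leq1 _)).
Qed.

Lemma polyq_horner (b0 b1 x : 'F_p) : (polyq b0 b1).[x] = x ^+ 2 + b1 * x + b0.
Proof. by rewrite /polyq !hornerE. Qed.

End Fp.

Theorem theorem3p16 (p : nat) (hp : prime p) :
  (forall b c : nat, (1 < b)%N -> (b <= c)%N -> (c < p)%N ->
     (simply_connected (aff_op (matD p b c)) <-> ~~ (b * c == 1 %[mod p])%N))
  /\ (forall b : nat, (1 < b)%N -> (b < p)%N ->
     (simply_connected (aff_op (matG p b)) <-> ~~ (b + 1 == 0 %[mod p])%N))
  /\ (forall b0 b1 : 'F_p, irreducible_poly (polyq b0 b1) ->
     (simply_connected (aff_op (matH b0 b1)) <-> b0 != 1)).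
Proof.
have p1 : (1 < p)%N by apply: prime_gt1.
have nz : forall n, (0 < n)%N -> (n < p)%N -> (n%:R : 'F_p) != 0.
  by move=> n h0 hn; apply: (@Fp_small_neq p hp n 0 hn (ltnW p1)); rewrite -lt0n.
have n1 : forall n, (1 < n)%N -> (n < p)%N -> (n%:R : 'F_p) != 1.
  by move=> n h1 hn; apply: (@Fp_small_neq p hp n 1 hn p1); rewrite neq_ltn h1 orbT.
split; [|split].
- move=> b c hb hbc hcp.
  have hbp : (b < p)%N by apply: leq_ltn_trans hcp.
  have hb0 : (0 < b)%N by apply: ltnW.
  have hc1 : (1 < c)%N by apply: leq_trans hbc.
  have hc0 : (0 < c)%N by apply: ltnW.
  have [E00 E01 E10 E11] : [/\ matD p b c 0 0 = b%:R, matD p b c 0 1 = 0,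
      matD p b c 1 0 = 0 & matD p b c 1 1 = c%:R].
    by rewrite /matD !mxE !eqxx ?n01 ?n10.
  have Hf : matD p b c \in unitmx.
    by apply: unit2; rewrite E00 E01 E10 E11 mul0r subr0 mulf_neq0 ?nz.
  have Hg : 1 - matD p b c \in unitmx.
    apply: unit2; have [-> -> -> ->] := oneB_ent _ (matD p b c).
    rewrite E00 E01 E10 E11 oppr0 mul0r subr0 mulf_neq0 //.
      by rewrite subr_eq0 eq_sym n1.
    by rewrite subr_eq0 eq_sym n1.
  have hh : ((b * c)%:R == 1 :> 'F_p) = (b * c == 1 %[mod p])%N := FpE p hp (b * c) 1.
  by rewrite (@sc_iff p _ Hf Hg hp) E00 E01 E10 E11 mul0r subr0 -natrM hh.
- move=> b hb hbp.
  have hb0 : (0 < b)%N by apply: ltnW.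
  have [E00 E01 E10 E11] : [/\ matG p b 0 0 = b%:R, matG p b 0 1 = 1,
      matG p b 1 0 = 0 & matG p b 1 1 = b%:R].
    by rewrite /matG !mxE !eqxx ?n01 ?n10.
  have Hf : matG p b \in unitmx.
    by apply: unit2; rewrite E00 E01 E10 E11 mulr0 subr0 mulf_neq0 ?nz.
  have Hg : 1 - matG p b \in unitmx.
    apply: unit2; have [-> -> -> ->] := oneB_ent _ (matG p b).
    rewrite E00 E01 E10 E11 oppr0 mulr0 subr0 mulf_neq0 //.
      by rewrite subr_eq0 eq_sym n1.
    by rewrite subr_eq0 eq_sym n1.
  rewrite (@sc_iff p _ Hf Hg hp) E00 E01 E10 E11 mulr0 subr0.
  have key : ((b%:R * b%:R : 'F_p) != 1) = ((b + 1)%:R != 0 :> 'F_p).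
    rewrite -subr_eq0.
    have -> : (b%:R * b%:R - 1 : 'F_p) = (b%:R - 1) * (b + 1)%:R.
      by rewrite natrD; ring.
    by rewrite mulf_eq0 negb_or subr_eq0 n1.
  have hh : ((b + 1)%:R == 0 :> 'F_p) = (b + 1 == 0 %[mod p])%N := FpE p hp (b + 1) 0.
  by rewrite key hh.
- move=> b0 b1 irr.
  have [E00 E01 E10 E11] : [/\ matH b0 b1 0 0 = 0, matH b0 b1 0 1 = 1,
      matH b0 b1 1 0 = - b0 & matH b0 b1 1 1 = - b1].
    by rewrite /matH !mxE !eqxx ?n01 ?n10.
  have sz := @size_polyq p b0 b1.
  have r0 := @irr_noroot p _ 0 irr sz.
  have r1 := @irr_noroot p _ 1 irr sz.
  rewrite /root !polyq_horner in r0 r1.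
  have Hf : matH b0 b1 \in unitmx.
    apply: unit2; rewrite E00 E01 E10 E11.
    have -> : (0 * - b1 - 1 * - b0 : 'F_p) = 0 ^+ 2 + b1 * 0 + b0 by ring.
    exact: r0.
  have Hg : 1 - matH b0 b1 \in unitmx.
    apply: unit2; have [-> -> -> ->] := oneB_ent _ (matH b0 b1).
    rewrite E00 E01 E10 E11.
    have -> : ((1 - 0) * (1 - - b1) - - 1 * - - b0 : 'F_p) = 1 ^+ 2 + b1 * 1 + b0 by ring.
    exact: r1.
  rewrite (@sc_iff p _ Hf Hg hp) E00 E01 E10 E11.
  have -> : (0 * - b1 - 1 * - b0 : 'F_p) = b0 by ring.
  by [].
Qed.
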